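(* Let $(G,\lambda),s,t$ be a minimum counter-example. Then $G$ is 2-connected, and every multiedge incident to $s$ or to $t$ has multiplicity $1$.
   Context: Graphs are finite, loopless, and may have parallel edges. The multiplicity of a pair $x,y$ is the number of edges with endpoints $x,y$; a pair of multiplicity at least 1 is a multiedge. A temporal graph is a pair $(G,\lambda)$ with $\lambda:E(G)\to\mathbb{Z}_{>0}$. A temporal $s,t$-path is an $s,t$-path $(s=v_1,e_1,\dots,e_{k-1},v_k=t)$ of $G$ (no repeated vertices) with $\lambda(e_1)\le\dots\le\lambda(e_{k-1})$. Two temporal $s,t$-paths are disjoint if they share no vertex other than $s,t$. For distinct non-adjacent $s,t$, a temporal $s,t$-vertex cut is a set $S\subseteq V(G)\setminus\{s,t\}$ such that $G-S$ (with $\lambda$ restricted) has no temporal $s,t$-path. $p_{G,\lambda}(s,t)$ is the maximum number of pairwise disjoint temporal $s,t$-paths and $c_{G,\lambda}(s,t)$ the minimum size of a temporal $s,t$-vertex cut. m-subdividing a multiedge $xy$ of multiplicity $k$: delete the $k$ edges between $x,y$, add a new vertex $z$, $k$ parallel edges $xz$ and $k$ parallel edges $zy$. An m-subdivision of $H$ is a graph obtained from $H$ by a finite (possibly empty) sequence of such operations; $H$ is an m-topological minor of $G$ if $G$ has a subgraph isomorphic to an m-subdivision of $H$. $\mathcal{F}_3$ is the gem: simple graph on $s,u,v,t,x$ with edges $su,uv,vt,xs,xu,xv,xt$. $\mathcal{F}_1$: vertices $s,u,v,t,w,w'$, simple edges $su,uv,vt,sw,wt,uw',w'v$, and exactly two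 parallel edges between $w,w'$. $\mathcal{F}_2$: vertices $s,u,v,t,w,w'$, simple edges $su,uv,vt,sw,uw,w'v,w't$, and exactly two parallel edges between $w,w'$. A minimum counter-example is a triple $(G,\lambda),s,t$ with $s,t\in V(G)$ distinct and non-adjacent, such that $p_{G,\lambda}(s,t)<c_{G,\lambda}(s,t)$, none of $\mathcal{F}_1,\mathcal{F}_2,\mathcal{F}_3$ is an m-topological minor of $G$, and $|V(G)|+|E(G)|$ is minimum among all such triples. *)

(* Defs.v *)
From mathcomp Require Import all_boot.
Set Implicit Arguments. Unset Strict Implicit. Unset Printing Implicit Defensive.

(* A finite multigraph: vertices 'I_nv, edges 'I_ne, each edge has an
   (unordered) pair of endpoints stored as an ordered pair.  Parallel edges
   are allowed; looplessness is the predicate [loopless]. *)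
Record mgraph := MG {
  nv : nat;
  ne : nat;
  ends : 'I_ne -> 'I_nv * 'I_nv
}.

Definition vert (G : mgraph) := 'I_(nv G).
Definition edge (G : mgraph) := 'I_(ne G).

Definition loopless (G : mgraph) : Prop :=
  forall e : 'I_(ne G), (ends e).1 != (ends e).2.

Definition joins (G : mgraph) (e : 'I_(ne G)) (x y : 'I_(nv G)) : bool :=
  (((ends e).1 == x) && ((ends e).2 == y)) ||
  (((ends e).1 == y) && ((ends e).2 == x)).

Definition mult (G : mgraph) (x y : 'I_(nv G)) : nat :=
  #|[pred e : 'I_(ne G) | joins e x y]|.

Definition adjacent (G : mgraph) (x y : 'I_(nv G)) : Prop :=
  exists e : 'I_(ne G), joins e x y.

Definition gsize (G : mgraph) : nat := nv G + ne G.

Fixpoint is_walk (G : mgraph) (v : 'I_(nv G)) (st : seq ('I_(ne G) * 'I_(nv G)))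
  : bool :=
  match st with
  | [::] => true
  | (e, w) :: st' => joins e v w && is_walk w st'
  end.

Definition pverts (G : mgraph) (s : 'I_(nv G)) (st : seq ('I_(ne G) * 'I_(nv G)))
  : seq 'I_(nv G) := s :: map snd st.

Definition tpath (G : mgraph) (lam : 'I_(ne G) -> nat) (s t : 'I_(nv G))
  (st : seq ('I_(ne G) * 'I_(nv G))) : bool :=
  [&& is_walk s st, last s (map snd st) == t, uniq (pverts s st)
    & sorted leq (map (fun p => lam p.1) st)].

Definition pdisjoint (G : mgraph) (s t : 'I_(nv G))
  (P Q : seq ('I_(ne G) * 'I_(nv G))) : Prop :=
  forall v, v \in pverts s P -> v \in pverts s Q -> v = s \/ v = t.

Definition has_disj_paths (G : mgraph) (lam : 'I_(ne G) -> nat) (s t : 'I_(nv G))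
  (k : nat) : Prop :=
  exists P : 'I_k -> seq ('I_(ne G) * 'I_(nv G)),
    (forall i, tpath lam s t (P i)) /\
    (forall i j, i != j -> pdisjoint s t (P i) (P j)).

Definition is_p (G : mgraph) (lam : 'I_(ne G) -> nat) (s t : 'I_(nv G)) (n : nat)
  : Prop :=
  has_disj_paths lam s t n /\ (forall m, has_disj_paths lam s t m -> m <= n).

Definition tcut (G : mgraph) (lam : 'I_(ne G) -> nat) (s t : 'I_(nv G))
  (S : {set 'I_(nv G)}) : Prop :=
  s \notin S /\ t \notin S /\
  forall st, tpath lam s t st -> ~ (all (fun v => v \notin S) (pverts s st)).

Definition is_c (G : mgraph) (lam : 'I_(ne G) -> nat) (s t : 'I_(nv G)) (n : nat)
  : Prop :=
  (exists S, tcut lam s t S /\ #|S| = n) /\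
  (forall S, tcut lam s t S -> n <= #|S|).

(* H' is obtained from H by m-subdividing a multiedge xy of multiplicity k:
   V(H') = phi(V(H)) + {z}; the edges of H not between x,y correspond
   bijectively (via psi) to the edges of H' not incident to z, with the
   corresponding endpoints; z is incident exactly to k edges to phi x and
   k edges to phi y. *)
Definition msub_step (H H' : mgraph) : Prop :=
  exists (x y : 'I_(nv H)), x != y /\ 0 < mult x y /\
  exists (z : 'I_(nv H')) (phi : 'I_(nv H) -> 'I_(nv H'))
         (psi : 'I_(ne H) -> 'I_(ne H')),
    [/\ injective phi,
        (forall v, phi v != z) &
        (forall w, w != z -> exists v, phi v = w)] /\
    (forall e, ~~ joins e x y -> joins (psi e) (phi (ends e).1) (phi (ends e).2)) /\
    (forall e1 e2, ~~ joins e1 x y -> ~~ joins e2 x y -> psi e1 = psi e2 -> e1 = e2) /\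
    (forall e', ~~ [exists w, joins e' z w] ->
        exists e, ~~ joins e x y /\ psi e = e') /\
    (forall e', (exists w, joins e' z w) -> joins e' z (phi x) || joins e' z (phi y)) /\
    mult z (phi x) = mult x y /\ mult z (phi y) = mult x y.

Inductive msubdiv : mgraph -> mgraph -> Prop :=
  | msubdiv_refl H : msubdiv H H
  | msubdiv_step H H1 H2 : msub_step H H1 -> msubdiv H1 H2 -> msubdiv H H2.

Definition subgraph_iso (H G : mgraph) : Prop :=
  exists (f : 'I_(nv H) -> 'I_(nv G)) (g : 'I_(ne H) -> 'I_(ne G)),
    injective f /\ injective g /\
    forall e, joins (g e) (f (ends e).1) (f (ends e).2).

Definition mtop_minor (H G : mgraph) : Prop :=
  exists H', msubdiv H H' /\ subgraph_iso H' G.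

Definition mk_graph (n : nat) (l : seq (nat * nat)) : mgraph :=
  @MG n.+1 (size l)
    (fun e : 'I_(size l) => let p := nth (0, 0) l e in
       ((inord p.1 : 'I_n.+1), (inord p.2 : 'I_n.+1))).

(* vertex numbering: s=0, u=1, v=2, t=3, w=4, w'=5 *)
Definition F1 : mgraph :=
  mk_graph 5 [:: (0,1); (1,2); (2,3); (0,4); (4,3); (1,5); (5,2); (4,5); (4,5)].
Definition F2 : mgraph :=
  mk_graph 5 [:: (0,1); (1,2); (2,3); (0,4); (1,4); (5,2); (5,3); (4,5); (4,5)].
(* gem: s=0, u=1, v=2, t=3, x=4 *)
Definition F3 : mgraph :=
  mk_graph 4 [:: (0,1); (1,2); (2,3); (4,0); (4,1); (4,2); (4,3)].

Definition counterex (G : mgraph) (lam : 'I_(ne G) -> nat) (s t : 'I_(nv G)) : Prop :=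
  [/\ loopless G, (forall e, 0 < lam e), s != t & ~ adjacent s t] /\
  (exists p c, [/\ is_p lam s t p, is_c lam s t c & p < c]) /\
  [/\ ~ mtop_minor F1 G, ~ mtop_minor F2 G & ~ mtop_minor F3 G].

Definition min_counterex (G : mgraph) (lam : 'I_(ne G) -> nat) (s t : 'I_(nv G))
  : Prop :=
  counterex lam s t /\
  forall (G' : mgraph) (lam' : 'I_(ne G') -> nat) (s' t' : 'I_(nv G')),
    counterex lam' s' t' -> gsize G <= gsize G'.

Definition adjb (G : mgraph) : rel 'I_(nv G) :=
  fun x y => [exists e : 'I_(ne G), joins e x y].

Definition connected_minus (G : mgraph) (X : {set 'I_(nv G)}) : Prop :=
  forall x y, x \notin X -> y \notin X ->
    connect (fun a b => [&& adjb a b, a \notin X & b \notin X]) x y.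

Definition k_connected (k : nat) (G : mgraph) : Prop :=
  k < nv G /\ forall X : {set 'I_(nv G)}, #|X| < k -> connected_minus X.

(* Main.v *)
Require Import Defs.
From mathcomp Require Import all_boot.
Set Implicit Arguments. Unset Strict Implicit. Unset Printing Implicit Defensive.

Lemma joinsC (G : mgraph) (e : 'I_(ne G)) x y : joins e x y = joins e y x.
Proof. by rewrite /joins orbC. Qed.

Lemma joins_end (G : mgraph) (e : 'I_(ne G)) a b u v :
  joins e a b -> joins e u v -> a = u \/ a = v.
Proof.
rewrite /joins.
case: (ends e) => p q /=.
by do 2 (case/orP => /andP[/eqP ? /eqP ?]); subst; auto.
Qed.

Lemma joins_same (G : mgraph) (e1 e2 : 'I_(ne G)) a b u v :
  joins e1 a b -> joins e2 a b -> joins e1 u v -> joins e2 u v.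
Proof.
rewrite /joins.
case: (ends e1) => p q /=; case: (ends e2) => p' q' /=.
by do 3 (case/orP => /andP[/eqP ? /eqP ?]); subst; rewrite !eqxx ?orbT.
Qed.

Lemma is_walk_cat (G : mgraph) (a : 'I_(nv G)) P1 P2 :
  is_walk a (P1 ++ P2) = is_walk a P1 && is_walk (last a (map snd P1)) P2.
Proof.
elim: P1 a => [|[e w] P1 IH] a //=.
by rewrite IH andbA.
Qed.

Lemma walk_step (G : mgraph) (a : 'I_(nv G)) P e v :
  is_walk a P -> (e, v) \in P -> exists2 u, u \in pverts a P & joins e u v.
Proof.
elim: P a => [|[e' w] P IH] a //=.
case/andP => hj hw; rewrite in_cons => /orP[/eqP [-> ->]|hin].
  by exists a; rewrite ?mem_head.
have [u hu hj'] := IH _ hw hin.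
by exists u => //; rewrite /pverts /= in_cons hu orbT.
Qed.

Lemma walk_snd (G : mgraph) (P : seq ('I_(ne G) * 'I_(nv G))) e v :
  (e, v) \in P -> v \in map snd P.
Proof. by move=> h; apply/mapP; exists (e, v). Qed.

Lemma walk_path (G : mgraph) (a : 'I_(nv G)) P :
  is_walk a P -> path (@adjb G) a (map snd P).
Proof.
elim: P a => [|[e w] P IH] a //= /andP[hj hw].
by rewrite IH // andbT; apply/existsP; exists e.
Qed.

Record emb (G' G : mgraph) := Emb {
  vf : 'I_(nv G') -> 'I_(nv G);
  ef : 'I_(ne G') -> 'I_(ne G);
  vf_inj : injective vf;
  ef_inj : injective ef;
  emb_ends : forall e, ends (ef e) = (vf (ends e).1, vf (ends e).2) }.

Section Emb.
Variables (G' G : mgraph) (E : emb G' G).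
Local Notation f := (vf E).
Local Notation g := (ef E).
Let finj := @vf_inj _ _ E.
Let ginj := @ef_inj _ _ E.

Lemma joins_emb e a b : joins (g e) (f a) (f b) = joins e a b.
Proof. by rewrite /joins emb_ends /= !(inj_eq finj). Qed.

Definition mapW (P : seq ('I_(ne G') * 'I_(nv G'))) :=
  map (fun p => (g p.1, f p.2)) P.

Lemma is_walk_emb a P : is_walk (f a) (mapW P) = is_walk a P.
Proof.
elim: P a => [|[e w] P IH] a //=.
by rewrite joins_emb IH.
Qed.

Lemma pverts_emb a P : pverts (f a) (mapW P) = map f (pverts a P).
Proof. by rewrite /pverts /mapW /= -!map_comp. Qed.

Lemma tpath_emb (lam : 'I_(ne G) -> nat) a b P :
  tpath lam (f a) (f b) (mapW P) = tpath (fun e => lam (g e)) a b P.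
Proof.
rewrite /tpath is_walk_emb pverts_emb (map_inj_uniq finj).
have -> : map snd (mapW P) = map f (map snd P) by rewrite /mapW -!map_comp.
rewrite last_map (inj_eq finj).
by rewrite /mapW -map_comp.
Qed.

Lemma lift_seq a (Q : seq ('I_(ne G) * 'I_(nv G))) :
  is_walk (f a) Q -> all (fun p => p.1 \in codom g) Q ->
  exists P, Q = mapW P.
Proof.
elim: Q a => [|[e v] Q IH] a /=; first by exists [::].
move=> hjw /andP[/codomP [e' ee] hall]; rewrite ee in hjw.
case/andP: hjw => hj hw.
have [v' ev] : exists v', v = f v'.
  move: hj; rewrite /joins emb_ends /=.
  case/orP => /andP[h1 h2]; [move/eqP: h2 | move/eqP: h1] => <-; by eexists.
subst v.
have [P ->] := IH _ hw hall.
by rewrite ee; exists ((e', v') :: P).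
Qed.


Lemma subiso_emb H : subgraph_iso H G' -> subgraph_iso H G.
Proof.
case=> fh [gh [fi [gi hj]]].
exists (fun v => f (fh v)), (fun e => g (gh e)); split.
  by move=> x y /finj /fi.
split; first by move=> x y /ginj /gi.
by move=> e; rewrite joins_emb.
Qed.

Lemma minor_emb H : mtop_minor H G' -> mtop_minor H G.
Proof. by case=> H' [h1 h2]; exists H'; split => //; apply: subiso_emb. Qed.

Variables (lam : 'I_(ne G) -> nat) (s t : 'I_(nv G')).
Let lam' := fun e => lam (g e).
Hypothesis Hpath : forall P, tpath lam (f s) (f t) P ->
  exists Q, [/\ tpath lam (f s) (f t) Q, pverts (f s) Q = pverts (f s) P &
                all (fun p => p.1 \in codom g) Q].

Lemma back_path P : tpath lam (f s) (f t) P ->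
  exists P', tpath lam' s t P' && (map f (pverts s P') == pverts (f s) P).
Proof.
move=> /Hpath [Q [hQ hv hall]].
have hw : is_walk (f s) Q by case/and4P: hQ.
have [P' eP] := lift_seq hw hall.
exists P'; rewrite -tpath_emb -pverts_emb -eP hQ -hv.
by rewrite eqxx.
Qed.

Lemma disj_fwd k : has_disj_paths lam' s t k -> has_disj_paths lam (f s) (f t) k.
Proof.
case=> P [hP hd]; exists (fun i => mapW (P i)); split.
  by move=> i; rewrite tpath_emb.
move=> i j hij v; rewrite !pverts_emb => /mapP [u hu ->] /mapP [u' hu' eu].
move/finj: eu => eu; subst u'.
by case: (hd i j hij u hu hu') => ->; auto.
Qed.

Lemma disj_bwd k : has_disj_paths lam (f s) (f t) k -> has_disj_paths lam' s t k.
Proof.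
case=> P [hP hd].
exists (fun i => xchoose (back_path (hP i))); split.
  by move=> i; case/andP: (xchooseP (back_path (hP i))).
move=> i j hij u hu hu'.
case/andP: (xchooseP (back_path (hP i))) => _ /eqP ei.
case/andP: (xchooseP (back_path (hP j))) => _ /eqP ej.
have := hd i j hij (f u).
rewrite -ei -ej !(mem_map finj) => /(_ hu hu') [] /finj ->; auto.
Qed.

Lemma cut_fwd S' : tcut lam' s t S' -> tcut lam (f s) (f t) (f @: S').
Proof.
case=> hs [ht hc]; split; first by rewrite mem_imset.
split; first by rewrite mem_imset.
move=> P hP hall.
case/andP: (xchooseP (back_path hP)) => hP' /eqP eP.
apply: (hc _ hP'); apply/allP => u hu.
have : f u \in pverts (f s) P by rewrite -eP map_f.
by move/(allP hall); rewrite mem_imset.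
Qed.

Lemma cut_bwd S : tcut lam (f s) (f t) S -> tcut lam' s t (f @^-1: S).
Proof.
case=> hs [ht hc]; split; first by rewrite inE.
split; first by rewrite inE.
move=> P hP hall.
apply: (hc (mapW P)); first by rewrite tpath_emb.
rewrite pverts_emb; apply/allP => v /mapP [u hu ->].
by have := allP hall u hu; rewrite inE.
Qed.

Lemma card_preim_le (S : {set 'I_(nv G)}) : #|f @^-1: S| <= #|S|.
Proof.
rewrite -(card_imset _ finj); apply: subset_leq_card.
by apply/subsetP => v /imsetP [u]; rewrite inE => hu ->.
Qed.

Lemma transfer_cex : counterex lam (f s) (f t) -> counterex lam' s t.
Proof.
case=> [[hl hpos hst hadj] [[p [c [hp hc hpc]]] [m1 m2 m3]]].
split; last split; last by split; move/minor_emb.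
  split.
  - move=> e; have := hl (g e); rewrite emb_ends /=.
    by apply: contra => /eqP ->.
  - by move=> e; apply: hpos.
  - by apply: contra hst => /eqP ->.
  - by case=> e he; apply: hadj; exists (g e); rewrite joins_emb.
exists p, c; split => //.
  case: hp => hp1 hp2; split; first exact: disj_bwd.
  by move=> m /disj_fwd; apply: hp2.
case: hc => [[S [hS eS]] hmin]; split.
  exists (f @^-1: S); split; first exact: cut_bwd.
  apply/eqP; rewrite eqn_leq -{1}eS card_preim_le /=.
  rewrite -eS; move: (hmin _ (cut_fwd (cut_bwd hS))).
  by rewrite (card_imset _ finj) eS.
by move=> S' /cut_fwd /hmin; rewrite (card_imset _ finj).
Qed.

End Emb.

Lemma min_contra (G' G : mgraph) (E : emb G' G) lam (s t : 'I_(nv G')) :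
  min_counterex lam (vf E s) (vf E t) -> gsize G' < gsize G ->
  (forall P, tpath lam (vf E s) (vf E t) P ->
    exists Q, [/\ tpath lam (vf E s) (vf E t) Q, pverts (vf E s) Q = pverts (vf E s) P &
                all (fun p => p.1 \in codom (ef E)) Q]) -> False.
Proof.
case=> hc hmin hsz hP.
have := hmin _ _ _ _ (transfer_cex hP hc).
by rewrite leqNgt hsz.
Qed.

Definition dele (G : mgraph) (e0 : 'I_(ne G)) : mgraph :=
  @MG (nv G) (ne G).-1 (fun e => ends (lift e0 e)).

Definition emb_dele (G : mgraph) (e0 : 'I_(ne G)) : emb (dele e0) G.
Proof.
refine (@Emb (dele e0) G (fun v => v) (lift e0) (fun x y h => h) (@lift_inj _ e0) _).
by move=> e /=; case: (ends _).
Defined.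

Lemma dele_contra (G : mgraph) lam (s t : 'I_(nv G)) (e0 : 'I_(ne G)) :
  min_counterex lam s t ->
  (forall P, tpath lam s t P ->
    exists Q, [/\ tpath lam s t Q, pverts s Q = pverts s P & all (fun p => p.1 != e0) Q]) ->
  False.
Proof.
move=> hm hP.
apply: (@min_contra _ _ (emb_dele e0) lam s t hm).
  rewrite /gsize /= ltn_add2l ltn_predL.
  exact: (leq_ltn_trans (leq0n _) (ltn_ord e0)).
move=> P /hP [Q [h1 h2 h3]]; exists Q; split => //.
apply/allP => p /(allP h3) hp.
case: (unliftP e0 p.1) => [j ->|eq]; first exact: codom_f.
by rewrite eq eqxx in hp.
Qed.

Definition delv (G : mgraph) (w : 'I_(nv G)) (d : 'I_(nv G).-1) : mgraph :=
  @MG (nv G).-1 (ne G)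
    (fun e => (odflt d (unlift w (ends e).1), odflt d (unlift w (ends e).2))).

Lemma lift_odflt n (w : 'I_n) (d : 'I_n.-1) v : v != w -> lift w (odflt d (unlift w v)) = v.
Proof. by case: (unliftP w v) => [j ->|->]; rewrite ?eqxx. Qed.

Definition emb_delv (G : mgraph) (w : 'I_(nv G)) (d : 'I_(nv G).-1)
  (hw : forall e, ((ends e).1 != w) && ((ends e).2 != w)) : emb (delv w d) G.
Proof.
refine (@Emb (delv w d) G (lift w) (fun e => e) (@lift_inj _ w) (fun x y h => h) _).
move=> e /=; case/andP: (hw e) => h1 h2.
by rewrite !lift_odflt //; apply: surjective_pairing.
Defined.

Lemma delv_contra (G : mgraph) lam (s t : 'I_(nv G)) (w : 'I_(nv G)) :
  min_counterex lam s t -> w != s -> w != t ->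
  (forall e, ((ends e).1 != w) && ((ends e).2 != w)) -> False.
Proof.
move=> hm hs ht hw.
case: (unliftP w s) => [s' es|es]; last by rewrite es eqxx in hs.
case: (unliftP w t) => [t' et|et]; last by rewrite et eqxx in ht.
have E := emb_delv s' hw.
apply: (@min_contra _ _ (emb_delv s' hw) lam s' t').
- by rewrite /= -es -et.
- rewrite /gsize /= ltn_add2r ltn_predL.
  exact: (leq_ltn_trans (leq0n _) (ltn_ord w)).
- move=> P hP; exists P; split => //.
  by apply/allP => p _; apply: codom_f.
Qed.

Lemma no_path_contra (G : mgraph) lam (s t : 'I_(nv G)) :
  counterex lam s t -> (forall P, ~ tpath lam s t P) -> False.
Proof.
case=> _ [[p [c [hp [_ hc] hpc]]] _] hno.
have : c <= #|(set0 : {set 'I_(nv G)})|.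
  apply: hc; split; first by rewrite inE.
  split; first by rewrite inE.
  by move=> P /hno.
by rewrite cards0 leqn0 => /eqP hc0; rewrite hc0 in hpc.
Qed.

Lemma path_le_head (a a' : nat) l : a' <= a -> path leq a l -> path leq a' l.
Proof. by case: l => //= b l h /andP[hb ->]; rewrite (leq_trans h hb). Qed.

Lemma sorted_rcons_le (L : seq nat) b b' : b <= b' -> sorted leq (rcons L b) -> sorted leq (rcons L b').
Proof.
case: L => //= x L h; rewrite !rcons_path => /andP[-> hb] /=.
exact: leq_trans hb h.
Qed.

Lemma joins_ends (G : mgraph) (e : 'I_(ne G)) : joins e (ends e).1 (ends e).2.
Proof. by rewrite /joins !eqxx. Qed.

Lemma pverts_cons (G : mgraph) (s : 'I_(nv G)) e v P :
  pverts s ((e, v) :: P) = s :: pverts v P.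
Proof. by []. Qed.

Lemma mult_s (G : mgraph) lam (s t : 'I_(nv G)) y :
  min_counterex lam s t -> 0 < mult s y -> mult s y = 1.
Proof.
move=> hm hpos; apply/eqP; rewrite eqn_leq hpos andbT leqNgt; apply/negP => h2.
have [e0 he0] := card_gt0P hpos.
rewrite inE /= in he0.
case: (@arg_minnP _ e0 (fun e => joins e s y) lam he0) => emin hjm hmin.
case: (pickP [pred e | joins e s y && (e != emin)]) => [e1 /andP[hj1 hne] | hnone]; last first.
  have : #|[pred e | joins e s y]| <= #|pred1 emin|.
    apply: subset_leq_card; apply/subsetP => e; rewrite !inE => hj.
    by move: (hnone e) => /=; rewrite hj /= => /negbFE.
  by rewrite card1 leqNgt -/(mult s y) h2.
apply: (dele_contra (e0 := e1) hm) => P hP.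
case/and4P: hP => hw hl hu hs.
case: P hw hl hu hs => [|[e v] P] hw hl hu hs.
  by case: hm => [[[_ _ hst _] _] _]; rewrite /= in hl; rewrite hl in hst.
case/andP: hw => hj hw.
have notin : forall p, p \in P -> p.1 != e1.
  move=> [e' v'] hin /=; apply/negP => /eqP ee; subst e'.
  have [u hu' hju] := walk_step hw hin.
  have hv' : v' \in pverts v P by rewrite /pverts in_cons (walk_snd hin) orbT.
  move: hu; rewrite pverts_cons cons_uniq => /andP[hns _].
  by case: (joins_end hj1 hju) => ee; subst; rewrite ?hu' ?hv' in hns.
exists ((if e == e1 then emin else e, v) :: P); split.
- apply/and4P; split => //.
  + apply/andP; split => //; case: ifP => // /eqP ee; subst e.
    exact: joins_same hj1 hjm hj.
  + move: hs => /=; case: ifP => // /eqP ee; subst e.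
    by apply: path_le_head; apply: hmin.
- by [].
- rewrite /=; apply/andP; split.
    by case: ifP => [_|/negbT]; rewrite // eq_sym.
  by apply/allP => p hp; apply: notin.
Qed.

Lemma is_walk_rcons (G : mgraph) (a : 'I_(nv G)) P e v :
  is_walk a (rcons P (e, v)) = is_walk a P && joins e (last a (map snd P)) v.
Proof. by rewrite -cats1 is_walk_cat /= andbT. Qed.

Lemma mult_t (G : mgraph) lam (s t : 'I_(nv G)) y :
  min_counterex lam s t -> 0 < mult t y -> mult t y = 1.
Proof.
move=> hm hpos; apply/eqP; rewrite eqn_leq hpos andbT leqNgt; apply/negP => h2.
have [e0 he0] := card_gt0P hpos.
rewrite inE /= in he0.
case: (@arg_maxnP _ e0 (fun e => joins e t y) lam he0) => emax hjm hmax.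
case: (pickP [pred e | joins e t y && (e != emax)]) => [e1 /andP[hj1 hne] | hnone]; last first.
  have : #|[pred e | joins e t y]| <= #|pred1 emax|.
    apply: subset_leq_card; apply/subsetP => e; rewrite !inE => hj.
    by move: (hnone e) => /=; rewrite hj /= => /negbFE.
  by rewrite card1 leqNgt -/(mult t y) h2.
apply: (dele_contra (e0 := e1) hm) => P hP.
case/and4P: hP => hw hl hu hs.
case/lastP: P hw hl hu hs => [|P [e v]] hw hl hu hs.
  by case: hm => [[[_ _ hst _] _] _]; rewrite /= in hl; rewrite hl in hst.
rewrite map_rcons last_rcons /= in hl; move/eqP: hl => hl; subst v.
rewrite is_walk_rcons in hw; case/andP: hw => hw hj.
have hpv : pverts s (rcons P (e, t)) = rcons (pverts s P) t.
  by rewrite /pverts map_rcons.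
have hnt : t \notin pverts s P.
  by move: hu; rewrite hpv rcons_uniq => /andP[].
have notin : forall p, p \in P -> p.1 != e1.
  move=> [e' v'] hin /=; apply/negP => /eqP ee; subst e'.
  have [u hu' hju] := walk_step hw hin.
  have hv' : v' \in pverts s P by rewrite /pverts in_cons (walk_snd hin) orbT.
  by case: (joins_end hj1 hju) => ee; subst; rewrite ?hu' ?hv' in hnt.
exists (rcons P (if e == e1 then emax else e, t)); split.
- apply/and4P; split.
  + rewrite is_walk_rcons hw /=; case: ifP => // /eqP ee; subst e.
    exact: joins_same hj1 hjm hj.
  + by rewrite map_rcons last_rcons.
  + by move: hu; rewrite /pverts !map_rcons.
  + move: hs; rewrite !map_rcons /=; case: ifP => // /eqP ee; subst e.
    by apply: sorted_rcons_le; apply: hmax.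
- by rewrite /pverts !map_rcons.
- rewrite all_rcons; apply/andP; split.
    by case: ifP => [_|/negbT]; rewrite //= eq_sym.
  by apply/allP => p hp; apply: notin.
Qed.

Definition EX (G : mgraph) (X : {set 'I_(nv G)}) : rel 'I_(nv G) :=
  fun a b => [&& adjb a b, a \notin X & b \notin X].

Lemma adjb_sym (G : mgraph) : symmetric (@adjb G).
Proof.
move=> a b; apply/existsP/existsP => [] [e he]; by exists e; rewrite joinsC.
Qed.

Lemma EX_sym (G : mgraph) (X : {set 'I_(nv G)}) : connect_sym (EX X).
Proof.
apply: sym_connect_sym => a b; rewrite /EX adjb_sym.
by case: (a \in X); case: (b \in X); rewrite ?andbF ?andbT.
Qed.

Lemma path_EX (G : mgraph) (X : {set 'I_(nv G)}) a l :
  path (@adjb G) a l -> all (fun v => v \notin X) (a :: l) -> path (EX X) a l.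
Proof.
elim: l a => [|b l IH] a //= /andP[hab hp] /and3P[ha hb hl].
by rewrite /EX hab ha hb /= IH //= hb.
Qed.

Lemma card_le1_eq (T : finType) (X : {set T}) x y :
  #|X| <= 1 -> x \in X -> y \in X -> x = y.
Proof.
move/card_le1P => h hx hy.
by have := h x hx y; rewrite hy inE => /esym /eqP.
Qed.

Lemma walk_conn (G : mgraph) (X : {set 'I_(nv G)}) a P u :
  is_walk a P -> uniq (pverts a P) -> u \in pverts a P -> u \notin X -> #|X| <= 1 ->
  (a \notin X /\ connect (EX X) a u) \/
  (last a (map snd P) \notin X /\ connect (EX X) u (last a (map snd P))).
Proof.
move=> /walk_path hp hu; rewrite /pverts in hu *.
move: hp hu; set vs := map snd P => hp hu.
rewrite in_cons => /orP[/eqP eu|hin] hux hX.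
  by subst u; left; split => //; apply: connect0.
case/splitPr: hin hp hu => p1 p2 hp hu.
move: hp; rewrite cat_path /= => /and3P[hp1 hlu hp2].
case hh: (has (fun v => v \in X) (a :: p1)).
- right.
  have hall : all (fun v => v \notin X) (u :: p2).
    apply/allP => v hv; apply/negP => hvX.
    case/hasP: hh => x hx hxX.
    have exy := card_le1_eq hX hxX hvX; subst v.
    move: hu; rewrite -cat_cons cat_uniq => /and3P[_ /hasP hn _].
    by apply: hn; exists x.
  rewrite last_cat /=; split; first by apply: (allP hall); apply: mem_last.
  apply: (path_connect (path_EX hp2 hall)); exact: mem_last.
- left.
  have hall : all (fun v => v \notin X) (a :: rcons p1 u).
    apply/allP => v; rewrite -rcons_cons mem_rcons in_cons => /orP[/eqP->//|hv].
    by apply/negP => hvX; move/negbT/hasPn: hh => /(_ v hv); rewrite hvX.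
  split; first by case/andP: hall.
  apply: (path_connect (path_EX _ hall)).
    by rewrite rcons_path hp1.
  by rewrite -rcons_cons mem_rcons mem_head.
Qed.

Lemma walk_endpoint (G : mgraph) (a : 'I_(nv G)) (P : seq ('I_(ne G) * 'I_(nv G))) (e : 'I_(ne G)) (v x : 'I_(nv G)) :
  is_walk a P -> (e, v) \in P -> (x == (ends e).1) || (x == (ends e).2) ->
  x \in pverts a P.
Proof.
move=> hw hin hx.
have [u hu hj] := walk_step hw hin.
have hv : v \in pverts a P by rewrite /pverts in_cons (walk_snd hin) orbT.
case/orP: hx => /eqP ->.
  by case: (joins_end (joins_ends e) hj) => ->.
have h2 : joins e (ends e).2 (ends e).1 by rewrite joinsC joins_ends.
by case: (joins_end h2 hj) => ->.
Qed.

Lemma two_conn (G : mgraph) lam (s t : 'I_(nv G)) :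
  min_counterex lam s t -> k_connected 2 G.
Proof.
move=> hm; have hc := hm.1.
have [_ [[p [c [hp hcc hpc]]] _]] := hc.
have [[_ _ hst hadj] _] := hc.
split.
  rewrite ltnNge; apply/negP => hle; apply: (no_path_contra hc) => P hP.
  case/and4P: hP => hw hl hu _.
  have := max_card (mem (pverts s P)); rewrite (card_uniqP hu) card_ord.
  case: P hw hl hu => [|[e v] [|[e' v'] P]] /= hw hl hu.
  - by rewrite hl in hst.
  - move=> _; apply: hadj; exists e; rewrite -(eqP hl); by case/andP: hw.
  - by move=> h; have := leq_trans h hle.
move=> X hX a b ha hb; apply/negPn/negP => hab.
have hX1 : #|X| <= 1 by [].
have [hA | hA] := boolP [&& s \notin X, t \notin X & ~~ connect (EX X) s t].
  case/and3P: hA => hs ht hnst.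
  have hcut : tcut lam s t X.
    split => //; split => // P hP hall.
    case/and4P: hP => hw hl _ _.
    have := path_connect (path_EX (walk_path hw) hall) (mem_last s (map snd P)).
    by rewrite (eqP hl) (negbTE hnst).
  have hc1 : c <= 1 := leq_trans (hcc.2 _ hcut) hX1.
  have hp0 : p = 0 by apply/eqP; rewrite -leqn0 -ltnS; exact: leq_trans hpc hc1.
  apply: (no_path_contra hc) => P hP.
  have : has_disj_paths lam s t 1.
    exists (fun _ => P); split => // i j; by rewrite !ord1 eqxx.
  by move/(hp.2); rewrite hp0.
have [r [hrX hr]] : exists r, r \notin X /\
    forall v, (v == s) || (v == t) -> v \notin X -> connect (EX X) v r.
  case hsX: (s \in X).
    have htX : t \notin X.
      apply/negP => htX.
      by have := card_le1_eq hX1 hsX htX; move/eqP; rewrite (negbTE hst).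
    exists t; split => // v /orP[/eqP->|/eqP->]; rewrite ?hsX //.
  exists s; split; first by rewrite hsX.
  move=> v /orP[/eqP->|/eqP->] hv; first exact: connect0.
  move: hA; rewrite hsX hv /= negbK => hst'.
  by rewrite EX_sym.
have [w [hwX hwr]] : exists w, w \notin X /\ ~~ connect (EX X) w r.
  case har: (connect (EX X) a r).
    exists b; split => //; apply/negP => hbr.
    apply: (negP hab); apply: (connect_trans har); by rewrite EX_sym.
  by exists a; rewrite har.
have hwst : forall v, (v == s) || (v == t) -> connect (EX X) w v -> False.
  move=> v hv hwv.
  have hvX : v \notin X.
    case/connectP: hwv => q hq ->.
    elim: q w hq hwX {hwr} => [|z q IH] w' //= /andP[/and3P[_ _ hz] hq] _.
    exact: IH.
  by apply: (negP hwr); apply: (connect_trans hwv); apply: hr.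
have hnot : forall P, tpath lam s t P -> w \notin pverts s P.
  move=> P hP; apply/negP => hwin; case/and4P: hP => hw hl hu _.
  case: (walk_conn hw hu hwin hwX hX1) => [[hsX hsw]|[htX hwt]].
    by apply: (hwst s); rewrite ?eqxx // EX_sym.
  by rewrite (eqP hl) in hwt; apply: (hwst t); rewrite ?eqxx ?orbT.
have hws : w != s.
  by apply/eqP => ews; apply: (hwst s); rewrite ?eqxx // ews connect0.
have hwt : w != t.
  by apply/eqP => ews; apply: (hwst t); rewrite ?eqxx ?orbT // ews connect0.
case: (pickP [pred e : 'I_(ne G) | (w == (ends e).1) || (w == (ends e).2)]) => [e0 he0 | hnone].
  apply: (dele_contra (e0 := e0) hm) => P hP; exists P; split => //.
  apply/allP => [[e v]] hin /=; apply/negP => /eqP ee; subst e.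
  apply: (negP (hnot P hP)); case/and4P: hP => hw _ _ _.
  exact: walk_endpoint hw hin he0.
apply: (delv_contra hm hws hwt) => e.
move: (hnone e) => /= /negbT; rewrite negb_or => /andP[h1 h2].
by apply/andP; split; rewrite eq_sym.
Qed.

Theorem lemma5 (G : mgraph) (lam : 'I_(ne G) -> nat) (s t : 'I_(nv G)) :
  min_counterex lam s t ->
  k_connected 2 G /\
  (forall y, 0 < mult s y -> mult s y = 1) /\
  (forall y, 0 < mult t y -> mult t y = 1).
Proof.
move=> hm; split; first exact: two_conn hm.
by split => y; [apply: mult_s hm | apply: mult_t hm].
Qed.
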